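(* Let $0<\alpha<1$, $K_0>1$, and let $F=(F_1,F_2)$ be a $C^1$ map defined near a point $z\in\mathbb R^2$ with $DF_z$ invertible, such that at $z$: (H1) $|F_{2x}|+\alpha|F_{2y}|+\alpha^2|F_{1y}|\le\alpha|F_{1x}|$; (H2) $|F_{1x}|-\alpha|F_{1y}|\ge K_0$; (H3) $|F_{1y}|+\alpha|F_{2y}|+\alpha^2|F_{2x}|\le\alpha|F_{1x}|$; (H4) $|F_{1x}|-\alpha|F_{2x}|\ge J_F(z)K_0$, where $J_F(z)=|F_{1x}F_{2y}-F_{1y}F_{2x}|$. Then, with $K^u_\alpha=\{(v_1,v_2):|v_2|\le\alpha|v_1|\}$, $K^s_\alpha=\{(v_1,v_2):|v_1|\le\alpha|v_2|\}$ and the max norm $|(v_1,v_2)|=\max(|v_1|,|v_2|)$: $DF_z(K^u_\alpha)\subseteq K^u_\alpha$; $|DF_zv|\ge K_0|v|$ for $v\in K^u_\alpha$; $DF_z^{-1}(K^s_\alpha)\subseteq K^s_\alpha$; and $|DF_z^{-1}v|\ge K_0|v|$ for $v\in K^s_\alpha$.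
   Context: All partial derivatives are evaluated at $z$. Tangent spaces are identified with $\mathbb R^2$. *)

(* Defs.v *)
From HB Require Import structures.
From mathcomp Require Import all_boot all_order all_algebra.
From mathcomp Require Import all_classical all_reals all_analysis.
Set Implicit Arguments. Unset Strict Implicit. Unset Printing Implicit Defensive.
Import Order.TTheory GRing.Theory Num.Theory.
Import numFieldNormedType.Exports.
Local Open Scope ring_scope.

(* Partial derivatives of F = (F1,F2) : R^2 -> R^2 at p:
   dX F p = (F1x, F2x),  dY F p = (F1y, F2y). *)
Definition dX {R : realType} (F : R * R -> R * R) (p : R * R) : R * R :=
  'D_((1, 0) : R * R) F p.
Definition dY {R : realType} (F : R * R -> R * R) (p : R * R) : R * R :=
  'D_((0, 1) : R * R) F p.

Definition C1_near {R : realType} (F : R * R -> R * R) (z : R * R) : Prop :=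
  exists e : R, 0 < e /\
    forall p : R * R, ball z e p ->
      derivable F p ((1, 0) : R * R) /\ derivable F p ((0, 1) : R * R) /\
      {for p, continuous (dX F)} /\ {for p, continuous (dY F)}.

Definition DF {R : realType} (F : R * R -> R * R) (z : R * R) (v : R * R) : R * R :=
  (v.1 * (dX F z).1 + v.2 * (dY F z).1, v.1 * (dX F z).2 + v.2 * (dY F z).2).

Definition JF {R : realType} (F : R * R -> R * R) (z : R * R) : R :=
  `|(dX F z).1 * (dY F z).2 - (dY F z).1 * (dX F z).2|.

Definition maxnorm {R : realType} (v : R * R) : R := Num.max `|v.1| `|v.2|.

Definition Ku {R : realType} (alpha : R) : set (R * R) :=
  [set v | `|v.2| <= alpha * `|v.1|].
Definition Ks {R : realType} (alpha : R) : set (R * R) :=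
  [set v | `|v.1| <= alpha * `|v.2|].

(* Main.v *)
Require Import Defs.
From HB Require Import structures.
From mathcomp Require Import all_boot all_order all_algebra.
From mathcomp Require Import all_classical all_reals all_analysis.
Import Order.TTheory GRing.Theory Num.Theory.
Import numFieldNormedType.Exports.
Local Open Scope ring_scope.
From mathcomp Require Import ring lra.
Lemma p1 (R : realFieldType) (al a b c d v1 v2 : R) : 0 < al -> 
 `|c| + al * `|d| + al ^+ 2 * `|b| <= al * `|a| -> `|v2| <= al * `|v1| ->
 `|v1 * c + v2 * d| <= al * `|v1 * a + v2 * b|.
Proof.
move=> ha H1 hv.
have t1 : `|v1 * c + v2 * d| <= `|v1| * `|c| + `|v2| * `|d| by rewrite -!normrM ler_normD.
have t2 : `|v1| * `|a| - `|v2| * `|b| <= `|v1 * a + v2 * b|.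
  by rewrite -!normrM; exact: lerB_normD.
have e1 := ler_wpM2r (normr_ge0 d) hv.
have e2 := ler_wpM2r (normr_ge0 b) hv.
have e3 := ler_wpM2l (normr_ge0 v1) H1.
have e4 := ler_wpM2l (ltW ha) t2.
move: t1 t2 e1 e2 e3 e4; set V1 := `|v1|; set V2 := `|v2|; set A := `|a|; set B := `|b|; set C := `|c|; set D := `|d|.
move=> *. nra.
Qed.
Lemma p2 (R : realFieldType) (al K0 a b c d v1 v2 : R) : 0 < al -> al < 1 ->
 `|a| - al * `|b| >= K0 -> `|v2| <= al * `|v1| ->
 K0 * Num.max `|v1| `|v2| <= Num.max `|v1 * a + v2 * b| `|v1 * c + v2 * d|.
Proof.
move=> ha ha1 H2 hv.
have ->: Num.max `|v1| `|v2| = `|v1|.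
  apply/max_idPl; apply: le_trans hv _; rewrite ler_piMl //; exact: ltW.
rewrite le_max; apply/orP; left.
have t2 : `|v1| * `|a| - `|v2| * `|b| <= `|v1 * a + v2 * b|.
  by rewrite -!normrM; exact: lerB_normD.
have e2 := ler_wpM2r (normr_ge0 b) hv.
have e3 := ler_wpM2l (normr_ge0 v1) H2.
move: t2 e2 e3; set V1 := `|v1|; set V2 := `|v2|; set A := `|a|; set B := `|b|.
move=> *. nra.
Qed.

Lemma p3 (R : realFieldType) (al K0 a b c d v1 v2 : R) : 0 < al -> 1 < K0 ->
 0 < `|a * d - b * c| ->
 `|b| + al * `|d| + al ^+ 2 * `|c| <= al * `|a| ->
 `|a| - al * `|c| >= `|a * d - b * c| * K0 ->
 `|v1 * a + v2 * b| <= al * `|v1 * c + v2 * d| -> `|v1| <= al * `|v2|.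
Proof.
move=> ha hK hJ H3 H4 hw.
have [//|hlt] := leP `|v1| (al * `|v2|).
exfalso.
have t1 : `|v1 * c + v2 * d| <= `|v1| * `|c| + `|v2| * `|d| by rewrite -!normrM ler_normD.
have t2 : `|v1| * `|a| - `|v2| * `|b| <= `|v1 * a + v2 * b|.
  by rewrite -!normrM; exact: lerB_normD.
have pos : 0 < `|a| - al * `|c|.
  apply: lt_le_trans H4; apply: mulr_gt0 => //; apply: lt_trans hK; exact: ltr01.
have H3' : `|b| + al * `|d| <= al * (`|a| - al * `|c|) by lra.
have e1 := ler_wpM2r (normr_ge0 v2) H3'.
have e2 : (`|a| - al * `|c|) * (al * `|v2|) < (`|a| - al * `|c|) * `|v1| by rewrite ltr_pM2l.
have e4 := ler_wpM2l (ltW ha) t1.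
move: t1 t2 e1 e2 e4 hw; set V1 := `|v1|; set V2 := `|v2|; set A := `|a|; set B := `|b|; set C := `|c|; set D := `|d|.
move=> /= *. nra.
Qed.

Lemma p4 (R : realFieldType) (al K0 a b c d v1 v2 : R) : 0 < al -> al < 1 ->
 0 < `|a * d - b * c| ->
 `|a| - al * `|c| >= `|a * d - b * c| * K0 ->
 `|v1 * a + v2 * b| <= al * `|v1 * c + v2 * d| ->
 K0 * Num.max `|v1 * a + v2 * b| `|v1 * c + v2 * d| <= Num.max `|v1| `|v2|.
Proof.
move=> ha ha1 hJ H4 hw.
have ->: Num.max `|v1 * a + v2 * b| `|v1 * c + v2 * d| = `|v1 * c + v2 * d|.
  apply/max_idPr; apply: le_trans hw _; rewrite ler_piMl //; exact: ltW.
rewrite le_max; apply/orP; right.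
have key : `|a * d - b * c| * `|v2| = `|a * (v1 * c + v2 * d) - c * (v1 * a + v2 * b)|.
  rewrite -normrM; congr `|_|; ring.
have t : `|a| * `|v1 * c + v2 * d| - `|c| * `|v1 * a + v2 * b|
   <= `|a * (v1 * c + v2 * d) - c * (v1 * a + v2 * b)|.
  by rewrite -!normrM; exact: lerB_dist.
rewrite -key in t.
rewrite -(ler_pM2l hJ).
have e1 := ler_wpM2l (normr_ge0 c) hw.
have e2 := ler_wpM2r (normr_ge0 (v1 * c + v2 * d)) H4.
move: t e1 e2; set J := `|a * d - b * c|; set W1 := `|v1 * a + v2 * b|; set W2 := `|v1 * c + v2 * d|.
move=> *. nra.
Qed.

Theorem proposition2p1 (R : realType) (alpha K0 : R) (F : R * R -> R * R) (z : R * R) :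
  0 < alpha -> alpha < 1 -> 1 < K0 ->
  C1_near F z ->
  bijective (DF F z) ->
  (* H1 *) `|(dX F z).2| + alpha * `|(dY F z).2| + alpha ^+ 2 * `|(dY F z).1|
             <= alpha * `|(dX F z).1| ->
  (* H2 *) `|(dX F z).1| - alpha * `|(dY F z).1| >= K0 ->
  (* H3 *) `|(dY F z).1| + alpha * `|(dY F z).2| + alpha ^+ 2 * `|(dX F z).2|
             <= alpha * `|(dX F z).1| ->
  (* H4 *) `|(dX F z).1| - alpha * `|(dX F z).2| >= JF F z * K0 ->
  (forall v, Ku alpha v -> Ku alpha (DF F z v)) /\
  (forall v, Ku alpha v -> maxnorm (DF F z v) >= K0 * maxnorm v) /\
  (forall w, Ks alpha w -> forall v, DF F z v = w -> Ks alpha v) /\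
  (forall w, Ks alpha w -> forall v, DF F z v = w -> maxnorm v >= K0 * maxnorm w).
Proof.
move=> ha ha1 hK _.
rewrite /JF /Ku /Ks /maxnorm /DF.
move: (dX F z) (dY F z) => [a c] [b d] /=.
move=> hbij H1 H2 H3 H4.
have hJ : 0 < `|a * d - b * c|.
  rewrite normr_gt0; apply/negP => /eqP h0.
  have inj := bij_inj hbij.
  have : (- b, a) = (0, 0) :> R * R.
    apply: inj => /=; congr (_, _); first by ring.
    by transitivity (a * d - b * c); [ring | rewrite h0; ring].
  case=> _ a0.
  move: H2; rewrite a0 normr0 => H2.
  have := mulr_ge0 (ltW ha) (normr_ge0 b); lra.
split; first by move=> [v1 v2] /= hv; exact: p1.
split; first by move=> [v1 v2] /= hv; exact: (@p2 _ _ _ _ _ _ _ _ _ ha ha1 H2 hv).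
split.
  move=> w hw [v1 v2] hvw; subst w; move: hw => /= hw.
  exact: (@p3 _ _ K0 _ _ _ _ _ _ ha hK hJ H3 H4 hw).
move=> w hw [v1 v2] hvw; subst w; move: hw => /= hw.
exact: (@p4 _ _ K0 _ _ _ _ _ _ ha ha1 hJ H4 hw).
Qed.
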